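(* In the setting below, if $\mu$ and $\nu$ are two $\sigma$-invariant Borel probability measures on $X$ with $p(\mu)=p(\nu)$, then $\mu(A)=\nu(A)$ for every $A\in\mathcal{P}_n$ and every $n\in\mathbb{N}$.
   Context: Setting: $G$ is a countable residually finite group, $r>1$; $(\Gamma_i)_{i\ge1}$ is a strictly decreasing sequence of finite index normal subgroups of $G$ with $\bigcap_i\Gamma_i=\{1_G\}$, $\Gamma_0=G$; $(D_i)_{i\ge0}$ are finite subsets with $D_0=\{1_G\}$, $D_i$ containing exactly one element of each coset of $\Gamma_i$, $1_G\in D_i\subseteq D_{i+1}$, $G=\bigcup_iD_i$, $D_j=\bigcup_{v\in D_j\cap\Gamma_i}vD_i$ for $j>i\ge1$, and $[G:\Gamma_i],[\Gamma_i:\Gamma_{i+1}]\ge3$. $\Sigma=\{1,\dots,r\}$, $\alpha_m\in\Sigma$ with $\alpha_m\equiv m\pmod r$. $J(0)=\{1_G\}$, $J(m)=D_m\setminus\bigcup_{i<m}J(i)\Gamma_{i+1}$; $\eta(hg)=\alpha_{m+1}$ for $h\in J(m)$, $g\in\Gamma_{m+1}$; $X=\overline{\{\sigma^g\eta\}}$ with $\sigma^gx(h)=x(g^{-1}h)$. $\mathrm{Per}(x,\Gamma,\alpha)=\{g:x(\gamma g)=\alpha\ \forall\gamma\in\Gamma\}$. For $n\ge1$: $C_n=\{x\in X:\mathrm{Per}(x,\Gamma_n,\alpha)=\mathrm{Per}(\eta,\Gamma_n,\alpha)\ \forall\alpha\in\Sigma\}$, $C_{n,i}=\{x\in C_n: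 x(g)=i\ \forall g\in J(n)\}$, and $\mathcal{P}_n=\{\sigma^{v^{-1}}C_{n,i}:1\le i\le r,\ v\in D_n\}$ (a clopen partition of $X$). $p(\mu)=(\mu(\{x\in X:x(1_G)=1\}),\dots,\mu(\{x\in X:x(1_G)=r\}))$. *)

(* Defs.v *)
From HB Require Import structures.
From mathcomp Require Import all_boot all_order all_algebra.
From mathcomp Require Import all_classical all_reals all_analysis.
Set Implicit Arguments. Unset Strict Implicit. Unset Printing Implicit Defensive.
Import Order.TTheory GRing.Theory Num.Theory.
Local Open Scope classical_set_scope.

Record is_group (G : Type) (mul : G -> G -> G) (inv : G -> G) (one : G) : Prop := {
  grp_mulA : forall x y z, mul x (mul y z) = mul (mul x y) z;
  grp_mul1g : forall x, mul one x = x;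
  grp_mulg1 : forall x, mul x one = x;
  grp_mulVg : forall x, mul (inv x) x = one;
  grp_mulgV : forall x, mul x (inv x) = one }.

Definition normal_subgroup (G : Type) (mul : G -> G -> G) (inv : G -> G) (one : G)
  (S : set G) : Prop :=
  [/\ S one, (forall x y, S x -> S y -> S (mul x (inv y)))
    & (forall g x, S x -> S (mul (mul g x) (inv g)))].

Definition coset_transversal (G : Type) (mul : G -> G -> G) (inv : G -> G)
  (D S : set G) : Prop :=
  forall g, exists! d, D d /\ S (mul (inv d) g).

Definition index_ge3 (G : Type) (mul : G -> G -> G) (inv : G -> G)
  (A S : set G) : Prop :=
  exists a b c, [/\ A a, A b & A c] /\
    [/\ ~ S (mul (inv a) b), ~ S (mul (inv a) c) & ~ S (mul (inv b) c)].

(** alpha_m : the element of Sigma = {1,...,r} congruent to m mod r. *)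
Definition alpha (r m : nat) : nat := ((m + r).-1 %% r).+1.

Definition setmul (G : Type) (mul : G -> G -> G) (A S : set G) : set G :=
  [set y | exists a s, [/\ A a, S s & y = mul a s]].

(** Jall m i = J(i) for i <= m. *)
Fixpoint Jall (G : Type) (mul : G -> G -> G) (one : G) (Gam D : nat -> set G)
    (m : nat) : nat -> set G :=
  match m with
  | 0 => fun _ => [set one]
  | m'.+1 => fun i =>
      if (i <= m')%N then Jall mul one Gam D m' i
      else D m'.+1 `\` \bigcup_(k in [set k | (k < m'.+1)%N])
                          setmul mul (Jall mul one Gam D m' k) (Gam k.+1)
  end.

(** J(0) = {1}, J(m) = D_m \ U_{i<m} J(i) Gamma_{i+1}. *)
Definition J (G : Type) (mul : G -> G -> G) (one : G) (Gam D : nat -> set G)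
  (m : nat) : set G := Jall mul one Gam D m m.

(** The configuration space Sigma^G (symbols are natural numbers; all
    points of X take values in {1,...,r}), with the product topology of
    discrete topologies. *)
Definition Omega (G : Type) := {ptws G -> nat}.

(** eta(h g) = alpha_{m+1} for h in J(m), g in Gamma_{m+1}.
    (The sets J(m) Gamma_{m+1} are pairwise disjoint; we pick the unique m.) *)
Definition eta (G : Type) (mul : G -> G -> G) (one : G) (Gam D : nat -> set G)
  (r : nat) : Omega G :=
  fun x => alpha r (xget 0%N [set m | setmul mul (J mul one Gam D m) (Gam m.+1) x
              /\ forall k, setmul mul (J mul one Gam D k) (Gam k.+1) x -> (m <= k)%N]).+1.

Definition sigma_act (G : Type) (mul : G -> G -> G) (inv : G -> G) (g : G)
  (x : Omega G) : Omega G := fun h => x (mul (inv g) h).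

Definition Xsub (G : Type) (mul : G -> G -> G) (inv : G -> G) (one : G)
  (Gam D : nat -> set G) (r : nat) : set (Omega G) :=
  closure (range (fun g => sigma_act mul inv g (eta mul one Gam D r))).

Definition Per (G : Type) (mul : G -> G -> G) (x : Omega G) (S : set G) (a : nat)
  : set G := [set g | forall c, S c -> x (mul c g) = a].

Definition Cn (G : Type) (mul : G -> G -> G) (inv : G -> G) (one : G)
  (Gam D : nat -> set G) (r n : nat) : set (Omega G) :=
  [set x | Xsub mul inv one Gam D r x /\
     forall a, (1 <= a <= r)%N ->
       Per mul x (Gam n) a = Per mul (eta mul one Gam D r) (Gam n) a].

Definition Cni (G : Type) (mul : G -> G -> G) (inv : G -> G) (one : G)
  (Gam D : nat -> set G) (r n i : nat) : set (Omega G) :=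
  [set x | Cn mul inv one Gam D r n x /\ forall g, J mul one Gam D n g -> x g = i].

Definition Pn (G : Type) (mul : G -> G -> G) (inv : G -> G) (one : G)
  (Gam D : nat -> set G) (r n : nat) : set (set (Omega G)) :=
  [set A | exists i v, [/\ (1 <= i <= r)%N, D n v &
     A = sigma_act mul inv (inv v) @` Cni mul inv one Gam D r n i]].

Definition OmegaB (G : Type) := g_sigma_algebraType (@open (Omega G)).

(* Main.v *)
Require Import Defs.
From HB Require Import structures.
From mathcomp Require Import all_boot all_order all_algebra.
From mathcomp Require Import all_classical all_reals all_analysis.
From mathcomp Require Import finmap.
Import Order.TTheory GRing.Theory Num.Theory.
Local Open Scope classical_set_scope.
Set Implicit Arguments. Unset Strict Implicit. Unset Printing Implicit Defensive.

Section Grp.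
Variables (G : countType) (mul : G -> G -> G) (inv : G -> G) (one : G).
Hypothesis Hgrp : is_group mul inv one.
Local Notation "x ** y" := (mul x y) (at level 40, left associativity).

Lemma gA x y z : x ** (y ** z) = x ** y ** z. Proof. by case: Hgrp. Qed.
Lemma g1x x : one ** x = x. Proof. by case: Hgrp. Qed.
Lemma gx1 x : x ** one = x. Proof. by case: Hgrp. Qed.
Lemma gVx x : inv x ** x = one. Proof. by case: Hgrp. Qed.
Lemma gxV x : x ** inv x = one. Proof. by case: Hgrp. Qed.
Lemma gKl x y : inv x ** (x ** y) = y. Proof. by rewrite gA gVx g1x. Qed.
Lemma gKVl x y : x ** (inv x ** y) = y. Proof. by rewrite gA gxV g1x. Qed.
Lemma gKr x y : x ** y ** inv y = x. Proof. by rewrite -gA gxV gx1. Qed.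
Lemma gKVr x y : x ** inv y ** y = x. Proof. by rewrite -gA gVx gx1. Qed.
Lemma gcanl x y z : x ** y = x ** z -> y = z.
Proof. by move=> h; rewrite -(gKl x y) h gKl. Qed.
Lemma gcanr x y z : y ** x = z ** x -> y = z.
Proof. by move=> h; rewrite -(gKr y x) h gKr. Qed.
Lemma ginvK x : inv (inv x) = x.
Proof. by apply: (@gcanl (inv x)); rewrite gxV gVx. Qed.
Lemma ginvM x y : inv (x ** y) = inv y ** inv x.
Proof. by apply: (@gcanl (x ** y)); rewrite gxV -gA (gA y) gxV g1x gxV. Qed.
Lemma ginv1 : inv one = one.
Proof. by rewrite -{2}(gVx one) gx1. Qed.
End Grp.

Lemma alpha_range r m : (0 < r)%N -> (1 <= alpha r m <= r)%N.
Proof. by move=> hr; rewrite /alpha /= ltn_pmod. Qed.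

Lemma alpha_neq r m : (1 < r)%N -> alpha r m.+1 <> alpha r m.+2.
Proof.
move=> hr; rewrite /alpha => -[].
rewrite !addSn -addSn !modnDr => e.
have : (m + 0 == m + 1 %[mod r]) by rewrite addn0 addn1 e.
by rewrite eqn_modDl mod0n modn_small.
Qed.

Lemma proj_nbhs (G : countType) (x : Omega G) (h : G) (W : set nat) :
  nbhs (x h) W -> nbhs x [set y : Omega G | W (y h)].
Proof.
move=> hW.
exact: (@proj_continuous G (fun _ => nat) h x W hW).
Qed.

Lemma nbhs_agree (G : countType) (x : Omega G) (s : seq G) :
  nbhs x [set y : Omega G | forall h, h \in s -> y h = x h].
Proof.
elim: s => [|h s IH].
  by apply: filterS filterT => y _ h; rewrite in_nil.
have h1 := @proj_nbhs _ x h _ (discrete_set1 (x h)).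
apply: filterS (filterI h1 IH) => y [/= e1 e2] k; rewrite inE => /orP [/eqP ->|]//.
exact: e2.
Qed.

Lemma shift_cont (G : countType) (f : G -> G) :
  continuous (fun (x : Omega G) => (fun h => x (f h)) : Omega G).
Proof.
move=> x.
apply/cvg_sup => i.
move=> U [? [[W oW <-]] /= Wx] /filterS; apply.
exact: (@proj_nbhs _ x (f i) W (open_nbhs_nbhs (conj oW Wx))).
Qed.

Lemma closure_agree (G : countType) (A : set (Omega G)) x : closure A x ->
  forall s : seq G, exists y, A y /\ forall h, h \in s -> y h = x h.
Proof. by move=> hx s; have [y [hy1 hy2]] := hx _ (nbhs_agree x s); exists y. Qed.

Lemma closed_coord (G : countType) (Q : G -> nat -> Prop) :
  closed [set x : Omega G | forall g a, Q g a -> x g = a].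
Proof.
move=> z hz g a hq; have [y [hy e]] := closure_agree hz [:: g].
by rewrite -(e g) ?mem_head //; exact: hy _ _ hq.
Qed.

Lemma closed_meas (G : countType) (A : set (OmegaB G)) :
  closed (A : set (Omega G)) -> measurable A.
Proof.
move=> hA; rewrite -(setCK A); apply: measurableC.
apply: sub_sigma_algebra; exact: closed_openC.
Qed.

Lemma sum_constE (G : choiceType) (R : realType) (S : set G) (c : R) : finite_set S ->
  (\sum_(v \in S) c)%R = (c *+ count xpredT (fset_set S))%R.
Proof. by move=> hS; rewrite fsbig_finite // big_const_seq iter_addr_0. Qed.

Lemma count_pos (G : choiceType) (S : set G) : finite_set S -> S !=set0 ->
  (0 < count xpredT (fset_set S))%N.
Proof.
move=> hS [v hv]; rewrite count_predT lt0n size_eq0.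
have hv' : v \in fset_set S by rewrite in_fset_set //; apply/mem_set.
move: hv'; move: (fset_set S) => A hA.
apply/eqP => eA. have : v \in enum_fset A by []. by rewrite eA.
Qed.

Lemma mul_cancel (R : realType) (c d : R) k : (0 < k)%N -> (c *+ k = d *+ k)%R -> c = d.
Proof. by move=> hk; rewrite -[(c *+ k)%R]mulr_natr -[(d *+ k)%R]mulr_natr => /mulIf; apply; rewrite pnatr_eq0 -lt0n. Qed.

Section Comb.
Variables (G : countType) (mul : G -> G -> G) (inv : G -> G) (one : G).
Hypothesis Hgrp : is_group mul inv one.
Local Notation "x ** y" := (mul x y) (at level 40, left associativity).
Variables (r : nat) (Gam D : nat -> set G).
Hypothesis Hr : (1 < r)%N.
Hypothesis HGam0 : Gam 0%N = setT.
Hypothesis HGamnorm : forall i, normal_subgroup mul inv one (Gam i).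
Hypothesis HGamdec : forall i, Gam i.+1 `<` Gam i.
Hypothesis HD0 : D 0%N = [set one].
Hypothesis HDtr : forall i, coset_transversal mul inv (D i) (Gam i).
Hypothesis HDinc : forall i, D i `<=` D i.+1.
Hypothesis HDfin : forall i, finite_set (D i).
Hypothesis HDcup : \bigcup_i D i = setT.
Hypothesis HDblock : forall i j, (1 <= i)%N -> (i < j)%N ->
     D j = \bigcup_(v in D j `&` Gam i) [set mul v d | d in D i].

Local Notation gA := (gA Hgrp).
Local Notation g1x := (g1x Hgrp).
Local Notation gx1 := (gx1 Hgrp).
Local Notation gVx := (gVx Hgrp).
Local Notation gxV := (gxV Hgrp).
Local Notation gKl := (gKl Hgrp).
Local Notation gKVl := (gKVl Hgrp).
Local Notation gKr := (gKr Hgrp).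
Local Notation gKVr := (gKVr Hgrp).
Local Notation ginvK := (ginvK Hgrp).
Local Notation ginvM := (ginvM Hgrp).
Local Notation ginv1 := (ginv1 Hgrp).
Local Notation gcanl := (gcanl Hgrp).
Local Notation gcanr := (gcanr Hgrp).

Lemma sg1 i : Gam i one. Proof. by case: (HGamnorm i). Qed.
Lemma sgB i x y : Gam i x -> Gam i y -> Gam i (x ** inv y).
Proof. by case: (HGamnorm i) => _ h _; apply: h. Qed.
Lemma sgV i x : Gam i x -> Gam i (inv x).
Proof. by move=> hx; rewrite -[inv x]g1x; apply: sgB => //; apply: sg1. Qed.
Lemma sgM i x y : Gam i x -> Gam i y -> Gam i (x ** y).
Proof. by move=> hx hy; rewrite -[y]ginvK; apply: sgB => //; apply: sgV. Qed.
Lemma sgJ i g x : Gam i x -> Gam i (g ** x ** inv g).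
Proof. by case: (HGamnorm i) => _ _ h; apply: h. Qed.
Lemma sgJ' i g x : Gam i x -> Gam i (inv g ** x ** g).
Proof. by move=> hx; have := sgJ (inv g) hx; rewrite ginvK. Qed.
Lemma sgVE i x : Gam i (inv x) -> Gam i x.
Proof. by move/sgV; rewrite ginvK. Qed.
Lemma Gam_dec i j : (i <= j)%N -> Gam j `<=` Gam i.
Proof.
move=> /subnK <-; elim: (j - i)%N => [|k IH] //=.
by rewrite addSn => x /(proj1 (HGamdec _)) /IH.
Qed.
Lemma Gam_lt i j x : (i < j)%N -> Gam j x -> Gam i.+1 x.
Proof. by move=> h; apply: Gam_dec. Qed.

Lemma D_uniq i d d' : D i d -> D i d' -> Gam i (inv d ** d') -> d = d'.
Proof.
move=> hd hd' hg; have [e [_ he]] := HDtr i d'.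
rewrite -(he d) //; apply: he; split => //; rewrite gVx; exact: sg1.
Qed.
Lemma D_rep i g : exists d, D i d /\ Gam i (inv d ** g).
Proof. by have [e [he _]] := HDtr i g; exists e. Qed.

Lemma t_exists m : exists t, Gam m t /\ ~ Gam m.+1 t.
Proof.
case: (pselect (exists t, Gam m t /\ ~ Gam m.+1 t)) => // hno; exfalso.
have [_ hn] := HGamdec m; apply: hn => t ht; apply: contrapT => nt.
by apply: hno; exists t.
Qed.

Local Notation J := (J mul one Gam D).
Definition L k := setmul mul (J k) (Gam k.+1).
Definition H m := fun g => forall k, (k < m)%N -> ~ L k g.

Lemma Jall_J m i : (i <= m)%N -> Jall mul one Gam D m i = J i.
Proof.
elim: m i => [|m IH] i.
  rewrite leqn0 => /eqP ->. reflexivity.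
move=> hi. rewrite [Jall _ _ _ _ _ _]/=. case: ifP => him. exact: IH.
have ei : i = m.+1 by apply/eqP; rewrite eqn_leq hi leqNgt ltnS him.
subst i. rewrite /Defs.J. rewrite [RHS]/=. rewrite ltnn. reflexivity.
Qed.

Lemma J0 : J 0 = [set one].
Proof. reflexivity. Qed.

Lemma JS m : J m.+1 = D m.+1 `\` \bigcup_(k in [set k | (k < m.+1)%N]) L k.
Proof.
rewrite /Defs.J [LHS]/= ltnn; congr (_ `\` _).
apply: eq_bigcupr => k hk; rewrite /L Jall_J //; exact: hk.
Qed.

Lemma J_DH m g : J m g <-> D m g /\ H m g.
Proof.
case: m => [|m].
  rewrite J0 HD0; split; first by move=> ->; split.
  by case.
rewrite JS; split.
  move=> [hd hn]; split => // k hk hL; apply: hn; exists k => //.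
move=> [hd hH]; split => // -[k hk hL].
exact: (hH k).
Qed.

Lemma J_D m g : J m g -> D m g. Proof. by move/J_DH => []. Qed.
Lemma J_H m g : J m g -> H m g. Proof. by move/J_DH => []. Qed.

Lemma L_rinv k g c : Gam k.+1 c -> L k g -> L k (g ** c).
Proof.
move=> hc [j [x [hj hx ->]]]; exists j, (x ** c); split => //; last by rewrite gA.
exact: sgM.
Qed.
Lemma L_linv k g c : Gam k.+1 c -> L k g -> L k (c ** g).
Proof.
move=> hc [j [x [hj hx ->]]]; exists j, (inv j ** c ** j ** x); split => //.
  apply: sgM => //; exact: sgJ'.
by rewrite !gA gxV g1x.
Qed.
Lemma H_rinv m g c : Gam m c -> H m g -> H m (g ** c).
Proof.
move=> hc hg k hk hL; apply: (hg k hk).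
rewrite -(gKr g c); apply: L_rinv => //; apply: sgV; exact: Gam_lt hk hc.
Qed.
Lemma H_linv m g c : Gam m c -> H m g -> H m (c ** g).
Proof.
move=> hc hg k hk hL; apply: (hg k hk).
rewrite -(gKl c g); apply: L_linv => //; apply: sgV; exact: Gam_lt hk hc.
Qed.
Lemma H_eq m g : H m g <-> exists j c, [/\ J m j, Gam m c & g = j ** c].
Proof.
split.
  move=> hg; have [d [hd hdg]] := D_rep m g.
  exists d, (inv d ** g); split => //; last by rewrite gKVl.
  apply/J_DH; split => //; have -> : d = g ** inv (inv d ** g) by rewrite ginvM ginvK gKVl.
  apply: H_rinv => //; exact: sgV.
move=> [j [c [/J_DH [_ hj] hc ->]]]; exact: H_rinv.
Qed.
Lemma L_H k g : L k g -> H k g.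
Proof.
move=> [j [x [/J_DH [_ hj] hx ->]]]; apply: H_rinv => //.
exact: (Gam_dec (leqnSn k)).
Qed.
Lemma HS m g : H m.+1 g <-> H m g /\ ~ L m g.
Proof.
split.
  by move=> h; split; [move=> k hk; apply: h; exact: ltnW| apply: h].
move=> [h1 h2] k; rewrite ltnS leq_eqVlt => /orP [/eqP -> //|]; exact: h1.
Qed.
Lemma L_uniq k k' g : L k g -> L k' g -> k = k'.
Proof.
move=> h1 h2; case: (ltngtP k k') => // hk.
  by have := L_H h2 hk h1.
by have := L_H h1 hk h2.
Qed.

Local Notation eta := (Defs.eta mul one Gam D r).
Lemma eta_val m g : L m g -> eta g = alpha r m.+1.
Proof.
move=> hL; rewrite /Defs.eta (@xget_unique _ 0%N _ m) //.
  by split => // k hk; rewrite (L_uniq hL hk).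
by move=> y [hy _]; exact: (L_uniq hy hL).
Qed.

Lemma Lcoset m j c : J m j -> Gam m c -> L m (j ** c) -> Gam m.+1 c.
Proof.
move=> hj hc [j' [x [hj' hx e]]].
have e2 : inv j' ** j = x ** inv c by rewrite -(gKr j c) e -!gA gKl.
have ejj : j' = j.
  apply: D_uniq; [exact: J_D hj'|exact: J_D hj|].
  rewrite e2; apply: sgB => //; exact: (Gam_dec (leqnSn m)).
by move: e; rewrite ejj => /gcanl ->.
Qed.

Lemma Hnext m j t : J m j -> Gam m t -> ~ Gam m.+1 t -> H m.+1 (j ** t).
Proof.
move=> hj ht nt; apply/HS; split.
  apply: H_rinv => //; exact: J_H hj.
by move/(Lcoset hj ht).
Qed.

Lemma Deep d m g : H m g -> exists z, Gam m (inv g ** z) /\ H (m + d) z.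
Proof.
elim: d m g => [|d IH] m g hg.
  by exists g; rewrite addn0 gVx; split => //; exact: sg1.
have [j [c [hj hc eg]]] := proj1 (H_eq _ _) hg.
have [t [ht nt]] := t_exists m.
have [z [hz1 hz2]] := IH _ _ (Hnext hj ht nt).
exists z; rewrite -addSnnS; split => //.
have -> : inv g ** z = inv c ** t ** (inv (j ** t) ** z).
  by rewrite eg !ginvM !gA gKr.
apply: sgM; first by apply: sgM => //; exact: sgV.
exact: (Gam_dec (leqnSn m)).
Qed.

Lemma H_nonempty m : exists j, J m j.
Proof.
have [z [_ hz]] := @Deep m 0 one (fun k hk => False_ind _ (notF hk)).
by have [j [c [hj _ _]]] := proj1 (H_eq _ _) hz; exists j.
Qed.

Lemma L_one k j : J k j -> L k j.
Proof. by move=> hj; exists j, one; split => //; [exact: sg1|rewrite gx1]. Qed.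

Lemma HoleTwo m q : H m q ->
  exists c1 c2, [/\ Gam m c1, Gam m c2, L m (c1 ** q) & L m.+1 (c2 ** q)].
Proof.
move=> /H_eq [h [d [hh hd ->]]].
have [t [ht nt]] := t_exists m.
have [j [g1 [hj hg1 ejt]]] := proj1 (H_eq _ _) (Hnext hh ht nt).
exists (h ** inv d ** inv h), (j ** inv (h ** d)); split.
- by apply: sgJ; apply: sgV.
- have -> : j ** inv (h ** d) = h ** (t ** inv g1 ** inv d) ** inv h.
    have -> : j = h ** t ** inv g1 by rewrite ejt gKr.
    by rewrite ginvM !gA.
  apply: sgJ; apply: sgM; [apply: sgM => //; apply: sgV => //; exact: (Gam_dec (leqnSn m))|].
  exact: sgV.
- have -> : h ** inv d ** inv h ** (h ** d) = h by rewrite !gA gKVr gKVr.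
  exact: L_one.
- by rewrite gKVr; apply: L_one.
Qed.

Variable n : nat.
Definition P a := Per mul eta (Gam n) a.

Lemma P_linv a c p : Gam n c -> P a p -> P a (c ** p).
Proof. by move=> hc hp c' hc'; rewrite gA; apply: hp; apply: sgM. Qed.
Lemma P_linvE a c p : Gam n c -> P a (c ** p) -> P a p.
Proof. by move=> hc hp; rewrite -(gKl c p); apply: P_linv => //; apply: sgV. Qed.

Lemma skelP k g : (k < n)%N -> L k g -> P (alpha r k.+1) g.
Proof.
move=> hk hL c hc; apply: eta_val; apply: L_linv => //; exact: Gam_lt hk hc.
Qed.

Lemma hole_notP q a : H n q -> ~ P a q.
Proof.
move=> hq hP; have [c1 [c2 [h1 h2 l1 l2]]] := HoleTwo hq.
have e1 := hP _ h1; have e2 := hP _ h2.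
rewrite (eta_val l1) in e1; rewrite (eta_val l2) in e2.
by apply: (@alpha_neq r n Hr); rewrite e1 e2.
Qed.

Lemma find_k s m : ~ Gam m s -> exists k, [/\ (k < m)%N, Gam k s & ~ Gam k.+1 s].
Proof.
elim: m => [|m IH] hs; first by exfalso; apply: hs; rewrite HGam0.
case: (pselect (Gam m s)) => h; first by exists m.
by have [k [hk h1 h2]] := IH h; exists k; split => //; exact: ltnW.
Qed.

Lemma aper s : (forall a, (1 <= a <= r)%N -> forall p, P a p -> P a (s ** p)) ->
  Gam n s.
Proof.
move=> hs; apply: contrapT => ns.
have [k [hkn hk nk]] := find_k ns.
have [j hj] := H_nonempty k.
set w := inv j ** s ** j.
have hw : Gam k w by apply: sgJ'.
have nw : ~ Gam k.+1 w.
  move=> hw'; apply: nk; have := sgJ j hw'.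
  by rewrite /w !gA gxV g1x gKr.
have hsj : H k.+1 (s ** j).
  have <- : j ** w = s ** j by rewrite /w !gA gxV g1x.
  exact: Hnext.
have [z [hz1 hz2]] := Deep (n - k.+1) hsj.
rewrite subnKC // in hz2.
apply: (hole_notP (a := alpha r k.+1) hz2).
have -> : z = s ** (j ** (inv (s ** j) ** z)) by rewrite gA gKVl.
apply: hs; first by apply: alpha_range; exact: ltnW.
apply: skelP => //; apply: L_rinv => //; exact: L_one.
Qed.

Hypothesis Hn : (1 <= n)%N.

Lemma Lev k : forall c h h', Gam n c -> J n h -> J n h' ->
  L k (c ** h) -> L k (c ** h').
Proof.
elim/ltn_ind: k => k IH c h h' hc hh hh' hL.
case: (ltnP k n) => hkn.
  have hH : H n (c ** h).
    have -> : c ** h = h ** (inv h ** c ** h) by rewrite !gA gxV g1x.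
    apply: H_rinv; [exact: sgJ'|exact: J_H].
  by exfalso; apply: (hH k hkn hL).
have [w [hwD hwc]] := D_rep k.+1 c.
have hwn : Gam n w.
  have -> : w = c ** inv (inv w ** c) by rewrite ginvM ginvK gKVl.
  apply: sgM => //; apply: sgV; apply: (Gam_dec _ hwc); exact: leqW.
have cA : forall x, L k (c ** x) <-> L k (w ** x).
  move=> x; have e : c ** x = w ** x ** (inv x ** (inv w ** c) ** x).
    by rewrite !gA gKr gxV g1x.
  have hd : Gam k.+1 (inv x ** (inv w ** c) ** x) by apply: sgJ'.
  rewrite e; split; last by apply: L_rinv.
  by move/(L_rinv (sgV hd)); rewrite gKr.
have cB : forall x, D n x -> D k.+1 (w ** x).
  move=> x hx; rewrite (HDblock Hn (hkn : (n < k.+1)%N)).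
  by exists w; [split|exists x].
have cC : forall d, D k.+1 d -> L k d -> J k d.
  move=> d hd [j [g [hj hg ed]]]; subst d.
  have ej : j = j ** g.
    by apply: (@D_uniq k.+1); [exact: HDinc (J_D hj)|exact: hd|rewrite gKl].
  by rewrite -ej.
have cD : forall x x', J n x -> J n x' -> J k (w ** x) -> J k (w ** x').
  move=> x x' hx hx' /J_DH [hD hH]; apply/J_DH; split.
  - case: (ltngtP n k) => [hnk|hnk|enk].
    + move: hD; rewrite (HDblock Hn hnk) => -[v [hvD hvn] [e he ev]].
      have ex : e = x.
        apply: (D_uniq he (J_D hx)).
        have -> : x = inv w ** (v ** e) by rewrite ev gKl.
        have -> : inv e ** (inv w ** (v ** e)) = inv e ** (inv w ** v) ** e by rewrite !gA.
        by apply: sgJ'; apply: sgM => //; apply: sgV.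
      subst e; have evw : v = w by apply: gcanr ev.
      have hwk : D k w by rewrite -evw.
      have eD := HDblock Hn hnk.
      have : (\bigcup_(v in D k `&` Gam n) [set v ** d | d in D n]) (w ** x').
        exists w; first by split.
        by exists x' => //; exact: J_D hx'.
      by rewrite -eD.
    + by move: (leq_trans hnk hkn); rewrite ltnn.
    + rewrite -enk in hD *.
      have ex : x = w ** x.
        apply: (D_uniq (J_D hx) hD).
        by rewrite gA; apply: sgJ'.
      have ew : w = one by apply: (@gcanr x); rewrite -ex g1x.
      by rewrite ew g1x; exact: J_D hx'.
  - move=> k' hk' hL'; apply: (hH k' hk'); exact: (IH k' hk' w x' x hwn hx' hx hL').
apply/cA; apply: L_one; apply: (cD h h') => //; apply: cC; [exact: cB (J_D hh)|exact/cA].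
Qed.

Lemma eta_Lev c h h' : Gam n c -> J n h -> J n h' -> eta (c ** h) = eta (c ** h').
Proof.
move=> hc hh hh'; rewrite /Defs.eta; congr (alpha r (xget 0%N _).+1).
apply/funext => m; apply/propext; split => -[h1 h2]; split.
- exact: Lev h1.
- by move=> k hk; apply: h2; exact: Lev hk.
- exact: Lev h1.
- by move=> k hk; apply: h2; exact: Lev hk.
Qed.


Local Notation X := (Xsub mul inv one Gam D r).
Local Notation sig := (sigma_act mul inv).

Lemma sig_comp g h x : sig g (sig h x) = sig (g ** h) x.
Proof. by apply/funext => k; rewrite /sigma_act ginvM gA. Qed.
Lemma sig_one x : sig one x = x.
Proof. by apply/funext => k; rewrite /sigma_act ginv1 g1x. Qed.
Lemma sig_cont g : continuous (sig g).
Proof. by move=> x; have := @shift_cont G (fun h => inv g ** h) x. Qed.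

Lemma X_inv g x : X x -> X (sig g x).
Proof.
move=> hx B hB; have := sig_cont hB => /hx [y [[h _ <-] hy]].
exists (sig g (sig h eta)); split => //; exists (g ** h) => //.
by rewrite sig_comp.
Qed.

Lemma Xchar x : X x -> forall s : seq G,
  exists g, forall h, h \in s -> x h = eta (inv g ** h).
Proof.
move=> hx s; have [y [[g _ <-] hy]] := closure_agree hx s.
by exists g => h hh; rewrite -hy.
Qed.

Lemma D_mono K K' : (K <= K')%N -> D K `<=` D K'.
Proof.
move=> /subnK <-; elim: (K' - K)%N => [|k IH] //= h hh.
by rewrite addSn; apply: HDinc; apply: IH.
Qed.

Lemma D_cover_seq (s : seq G) : exists K, forall h, h \in s -> D K h.
Proof.
elim: s => [|g s [K IH]]; first by exists 0%N.
have : [set: G] g by [].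
rewrite -HDcup => -[K' _ hK'].
exists (maxn K K') => h; rewrite inE => /orP [/eqP ->|hh].
  by apply: (D_mono (leq_maxr K K')).
by apply: (D_mono (leq_maxl K K')); apply: IH.
Qed.

Lemma D_seq K : exists s : seq G, forall h, D K h <-> h \in s.
Proof.
have [s es] := proj1 (finite_seqP _) (HDfin K).
by exists s => h; rewrite es.
Qed.

Definition Good m x u := forall K, exists g, Gam m (inv u ** g) /\
  forall h, D K h -> x h = eta (inv g ** h).
Definition Bad m x u K := ~ exists g, Gam m (inv u ** g) /\
  forall h, D K h -> x h = eta (inv g ** h).

Lemma Bad_mono m x u K K' : (K <= K')%N -> Bad m x u K -> Bad m x u K'.
Proof.
move=> hle hb [g [hg hg2]]; apply: hb; exists g; split => // h hh.
by apply: hg2; exact: D_mono hle _ hh.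
Qed.

Lemma good_exists m x : X x -> exists u, D m u /\ Good m x u.
Proof.
move=> hx; apply: contrapT => hno.
have hbad : forall u, D m u -> exists K, Bad m x u K.
  move=> u hu; apply: contrapT => hK; apply: hno; exists u; split => // K.
  apply: contrapT => nK; apply: hK; by exists K.
have [s hs] := D_seq m.
have : forall t : seq G, {subset t <= s} -> exists K0, forall u, u \in t -> Bad m x u K0.
  elim => [|u t IH] ht; first by exists 0%N.
  have [K1 h1] : exists K, Bad m x u K by apply: hbad; apply/hs; apply: ht; exact: mem_head.
  have ht' : {subset t <= s} by move=> z hz; apply: ht; rewrite inE hz orbT.
  have [K2 h2] := IH ht'.
  exists (maxn K1 K2) => v; rewrite inE => /orP [/eqP ->|hv].
    exact: Bad_mono (leq_maxl _ _) h1.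
  exact: Bad_mono (leq_maxr _ _) (h2 v hv).
move=> /(_ s (fun z hz => hz)) [K0 hK0].
have [s0 hs0] := D_seq K0.
have [g hg] := Xchar hx s0.
have [u [hu hug]] := D_rep m g.
apply: (hK0 u (proj1 (hs u) hu)); exists g; split => // h hh.
by apply: hg; apply/hs0.
Qed.


Lemma cover x : X x -> exists u, Good n.+2 x u /\
  forall a p, Per mul x (Gam n) a p <-> P a (inv u ** p).
Proof.
move=> hx; have [u [_ hu]] := good_exists n.+2 hx.
exists u; split => // a p; split; last first.
  move=> hp c hc; have [K hK] := D_cover_seq [:: c ** p].
  have [g [hg hgK]] := hu K; rewrite hgK; last by apply: hK; exact: mem_head.
  have -> : inv g ** (c ** p) = inv g ** c ** u ** (inv u ** p) by rewrite !gA gKr.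
  apply: hp.
  have -> : inv g ** c ** u = inv (inv u ** g) ** (inv u ** c ** u).
    by rewrite ginvM ginvK !gA gKr.
  apply: sgM; last exact: sgJ'.
  apply: sgV; apply: (Gam_dec _ hg); exact: leqW.
move=> hp; set q := inv u ** p.
case: (pselect (H n q)) => hq.
  exfalso; have [c1 [c2 [h1 h2 l1 l2]]] := HoleTwo hq.
  have [K hK] := D_cover_seq [:: u ** c1 ** inv u ** p; u ** c2 ** inv u ** p].
  have [g [hg hgK]] := hu K.
  have e1 := hp _ (sgJ u h1); have e2 := hp _ (sgJ u h2).
  rewrite hgK in e1; last by apply: hK; rewrite !inE eqxx.
  rewrite hgK in e2; last by apply: hK; rewrite !inE eqxx orbT.
  have hgu : Gam n.+2 (inv g ** u) by have := sgV hg; rewrite ginvM ginvK.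
  have ee : forall c, inv g ** (u ** c ** inv u ** p) = inv g ** u ** (c ** q).
    by move=> c; rewrite /q !gA.
  rewrite ee (eta_val (L_linv _ l1)) in e1; last exact: (Gam_dec (leqnSn _)).
  rewrite ee (eta_val (L_linv _ l2)) in e2 => //.
  by apply: (@alpha_neq r n Hr); rewrite e1 e2.
have [k [hk hL]] : exists k, (k < n)%N /\ L k q.
  apply: contrapT => nk; apply: hq => k hk hL; apply: nk; by exists k.
have hP := skelP hk hL.
have [K hK] := D_cover_seq [:: p].
have [g [hg hgK]] := hu K.
have := hp one (sg1 n); rewrite g1x hgK; last by apply: hK; exact: mem_head.
have -> : inv g ** p = inv g ** u ** q by rewrite /q !gA gKr.
rewrite hP => [<- //|].
have := sgV hg; rewrite ginvM ginvK => hh; apply: (Gam_dec _ hh); exact: leqW.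
Qed.

Lemma Per_sig w x a p :
  Per mul (sig w x) (Gam n) a p <-> Per mul x (Gam n) a (inv w ** p).
Proof.
split => hp c hc.
  have := hp _ (sgJ w hc); rewrite /sigma_act.
  by have -> : inv w ** (w ** c ** inv w ** p) = c ** (inv w ** p) by rewrite !gA gVx g1x.
rewrite /sigma_act; have := hp _ (sgJ' w hc).
by have -> : inv w ** c ** w ** (inv w ** p) = inv w ** (c ** p) by rewrite !gA gKr.
Qed.

Definition Coord (x : Omega G) := forall a, (1 <= a <= r)%N -> forall p, P a p ->
  forall c, Gam n c -> x (c ** p) = a.

Lemma Cn_char x : Cn mul inv one Gam D r n x <-> X x /\ Coord x.
Proof.
split.
  move=> [hx he]; split => // a ha p hp; move: (he a ha) => e.
  by have : Per mul x (Gam n) a p by rewrite e.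
move=> [hx hc]; split => // a ha.
have [u [_ hu]] := cover hx.
have hs : Gam n (inv u).
  apply: aper => b hb p hp; apply/hu; exact: hc.
apply/funext => p; apply/propext; rewrite hu; split.
  by move=> h; rewrite -(gKVl u p); apply: P_linv => //; rewrite -[u]ginvK; apply: sgV.
by move=> h; apply: P_linv.
Qed.

Lemma Cn_X x : Cn mul inv one Gam D r n x -> X x.
Proof. by case. Qed.

Lemma F2 x h h' : Cn mul inv one Gam D r n x -> J n h -> J n h' -> x h = x h'.
Proof.
move=> hC hh hh'; have hx := Cn_X hC.
have [u [hu he]] := cover hx.
have hs : Gam n (inv u).
  apply: aper => b hb p hp; apply/he.
  by case: hC => _ /(_ b hb) ->.
have [g [hg hgK]] := hu n.
have hgn : Gam n (inv g).
  have -> : inv g = inv (inv u ** g) ** inv u by rewrite ginvM ginvK gKr.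
  apply: sgM => //; apply: sgV; apply: (Gam_dec _ hg); exact: leqW.
rewrite !hgK; [|exact: J_D|exact: J_D].
exact: eta_Lev.
Qed.

Lemma F3 x v : Cn mul inv one Gam D r n x -> D n v -> ~ J n v -> x v = eta v.
Proof.
move=> hC hv nv.
have nH : ~ H n v by move=> hH; apply: nv; apply/J_DH.
have [k [hk hL]] : exists k, (k < n)%N /\ L k v.
  apply: contrapT => nk; apply: nH => k hk hL; apply: nk; by exists k.
have hP := skelP hk hL.
have ha : (1 <= alpha r k.+1 <= r)%N by apply: alpha_range; exact: ltnW.
case: hC => _ /(_ _ ha) e.
have : Per mul x (Gam n) (alpha r k.+1) v by rewrite e.
move=> /(_ one (sg1 n)); rewrite g1x => ->.
by have := hP one (sg1 n); rewrite g1x.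
Qed.

Lemma T_cover x : X x -> exists v, D n v /\ Cn mul inv one Gam D r n (sig v x).
Proof.
move=> hx; have [u [_ hu]] := cover hx.
have [v [hv hvu]] := D_rep n (inv u).
exists v; split => //; split; first exact: X_inv.
move=> a ha; apply/funext => p; apply/propext.
rewrite Per_sig hu.
have hw : Gam n (inv u ** inv v).
  have -> : inv u ** inv v = inv u ** (inv v ** inv u) ** u by rewrite !gA gKVr.
  exact: sgJ'.
rewrite gA; split; first exact: P_linvE.
exact: P_linv.
Qed.

Lemma T_disj x v w : D n v -> D n w -> Cn mul inv one Gam D r n (sig v x) ->
  Cn mul inv one Gam D r n (sig w x) -> v = w.
Proof.
move=> hv hw [_ ev] [_ ew].
have hs : Gam n (v ** inv w).
  apply: aper => a ha p hp.
  have : Per mul (sig w x) (Gam n) a p by rewrite ew.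
  move/Per_sig => h1.
  have : Per mul (sig v x) (Gam n) a (v ** inv w ** p).
    by apply/Per_sig; rewrite !gA gVx g1x.
  by rewrite ev.
apply: (@D_uniq n) => //.
have -> : inv v ** w = inv v ** inv (v ** inv w) ** v by rewrite ginvM ginvK !gA gKVr.
by apply: sgJ'; apply: sgV.
Qed.


Local Notation Cn_s := (Cn mul inv one Gam D r n).
Local Notation Cni_s := (Cni mul inv one Gam D r n).

Lemma X_closed : closed X.
Proof. exact: closed_closure. Qed.

Lemma Coord_closed : closed Coord.
Proof.
move=> z hz a ha p hp c hc; have [y [hy e]] := closure_agree hz [:: c ** p].
by rewrite -(e (c ** p)) ?mem_head //; exact: hy.
Qed.

Lemma Cn_eq : Cn_s = X `&` Coord.
Proof. by apply/funext => x; apply/propext; rewrite Cn_char. Qed.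

Lemma Cn_closed : closed Cn_s.
Proof. rewrite Cn_eq; apply: closedI; [exact: X_closed|exact: Coord_closed]. Qed.

Lemma Jcoord_closed i : closed [set x : Omega G | forall g, J n g -> x g = i].
Proof.
move=> z hz g hg; have [y [hy e]] := closure_agree hz [:: g].
by rewrite -(e g) ?mem_head //; exact: hy.
Qed.

Lemma pt_closed v i : closed [set x : Omega G | x v = i].
Proof.
move=> z hz; have [y [hy e]] := closure_agree hz [:: v].
by rewrite /= -(e v) ?mem_head.
Qed.

Lemma Cni_closed i : closed (Cni_s i).
Proof. by apply: closedI; [exact: Cn_closed|exact: Jcoord_closed]. Qed.

Lemma sig_pre_closed v (A : set (Omega G)) : closed A -> closed (sig v @^-1` A).
Proof. by move=> hA; apply: preimage_closed => // x _; exact: sig_cont. Qed.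

Lemma union_eq (Q : G -> set (Omega G)) :
  \bigcup_(v in D n) (sig v @^-1` (Cn_s `&` Q v)) =
  [set x | X x /\ exists v, D n v /\ Cn_s (sig v x) /\ Q v (sig v x)].
Proof.
apply/funext => x; apply/propext; split.
  move=> [v hv [h1 h2]]; split; last by exists v.
  have := X_inv (g := inv v) (Cn_X h1); rewrite sig_comp gVx sig_one //.
by move=> [_ [v [hv [h1 h2]]]]; exists v.
Qed.

Lemma union_X : \bigcup_(v in D n) (sig v @^-1` (Cn_s `&` setT)) = X.
Proof.
rewrite union_eq; apply/funext => x; apply/propext; split; first by case.
move=> hx; split => //; have [v [hv hc]] := T_cover hx; by exists v.
Qed.

Lemma union_Xi i : \bigcup_(v in D n) (sig v @^-1` (Cn_s `&` [set y | y v = i])) =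
  X `&` [set x | x one = i].
Proof.
rewrite union_eq; apply/funext => x; apply/propext; split.
  by move=> [hx [v [hv [hc hi]]]]; split => //; move: hi; rewrite /sigma_act /= gVx.
move=> [hx hi]; split => //; have [v [hv hc]] := T_cover hx; exists v; split => //.
by split => //; rewrite /sigma_act /= gVx.
Qed.


Section Meas.
Variables (R : realType) (mu : probability (OmegaB G) R).
Hypothesis HmuX : mu X = 1%E.
Hypothesis Hmuinv : forall g (A : set (OmegaB G)), measurable A ->
     mu (sigma_act mul inv g @^-1` A) = mu A.

Lemma mu_union (Q : G -> set (Omega G)) : (forall v, closed (Q v)) ->
  mu (\bigcup_(v in D n) (sig v @^-1` (Cn_s `&` Q v))) =
  (\sum_(v \in D n) mu (Cn_s `&` Q v))%E.
Proof.
move=> hQ.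
have hm : forall v, measurable (Cn_s `&` Q v : set (OmegaB G)).
  by move=> v; apply: closed_meas; apply: closedI => //; exact: Cn_closed.
rewrite (@measure_fin_bigcup _ _ _ mu G (D n)
   (fun v => (sig v @^-1` (Cn_s `&` Q v) : set (OmegaB G)))) //.
- by apply: eq_fsbigr => v _; apply: Hmuinv.
- move=> v w hv hw [x [[h1 _] [h2 _]]]; exact: T_disj hv hw h1 h2.
- move=> v _; apply: closed_meas; apply: sig_pre_closed.
  by apply: closedI => //; exact: Cn_closed.
Qed.

Lemma mu_XI (B : set (OmegaB G)) : measurable B -> mu (X `&` B) = mu B.
Proof.
move=> mB; have mX : measurable (X : set (OmegaB G)) by apply: closed_meas; exact: X_closed.
rewrite (@measureDI _ _ _ mu B X) //.
suff h0 : mu (B `\` X) = 0%E by rewrite [Y in (Y + _)%E]h0 add0e setIC.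
  apply/eqP; rewrite eq_le measure_ge0 andbT.
  have : mu (~` X) = 0%E by rewrite probability_setC // HmuX subee.
  move=> <-; apply: le_measure.
  - by apply/mem_set; apply: measurableD.
  - by apply/mem_set; apply: measurableC.
  - by move=> x [].
Qed.

Lemma keyT : (\sum_(v \in D n) mu Cn_s)%E = 1%E.
Proof.
rewrite -HmuX -union_X mu_union; last by move=> _; exact: closedT.
by apply: eq_fsbigr => v _; rewrite setIT.
Qed.

Lemma keyI i : (\sum_(v \in D n) mu (Cn_s `&` [set y | y v = i]))%E =
  mu [set x | x one = i].
Proof.
rewrite -mu_union; last by move=> v; exact: pt_closed.
rewrite union_Xi mu_XI //; apply: closed_meas; exact: pt_closed.
Qed.

Lemma fsum_fine (F : G -> set (OmegaB G)) : (forall v, measurable (F v)) ->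
  (\sum_(v \in D n) mu (F v))%E = (\sum_(v \in D n) fine (mu (F v)))%:E.
Proof.
move=> hF; rewrite -fsumEFin //; apply: eq_fsbigr => v _.
by rewrite fineK // fin_num_measure.
Qed.

End Meas.


Lemma SJ i v : J n v -> Cn_s `&` [set y | y v = i] = Cni_s i.
Proof.
move=> hv; apply/funext => x; apply/propext; split.
  by move=> [hC hx]; split => // g hg; rewrite (F2 hC hg hv).
by move=> [hC hall]; split => //; exact: hall.
Qed.

Lemma SnJ i v : D n v -> ~ J n v ->
  Cn_s `&` [set y | y v = i] = if eta v == i then Cn_s else set0.
Proof.
move=> hv nv; apply/funext => x; apply/propext.
case: eqP => e; split.
- by case.
- by move=> hC; split => //=; rewrite (F3 hC hv nv).
- by move=> [hC /=]; rewrite (F3 hC hv nv).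
- by [].
Qed.

Lemma Cni_eq (R : realType) (mu nu : probability (OmegaB G) R) :
  mu X = 1%E -> nu X = 1%E ->
  (forall g (A : set (OmegaB G)), measurable A ->
     mu (sigma_act mul inv g @^-1` A) = mu A) ->
  (forall g (A : set (OmegaB G)), measurable A ->
     nu (sigma_act mul inv g @^-1` A) = nu A) ->
  (forall i, (1 <= i <= r)%N ->
     mu [set x : OmegaB G | x one = i] = nu [set x : OmegaB G | x one = i]) ->
  forall i, (1 <= i <= r)%N -> mu (Cni_s i) = nu (Cni_s i).
Proof.
move=> HmuX HnuX Hmi Hni Hp i hi.
have mC : measurable (Cn_s : set (OmegaB G)) by apply: closed_meas; exact: Cn_closed.
have mQ : forall v, measurable (Cn_s `&` [set y | y v = i] : set (OmegaB G)).
  by move=> v; apply: closed_meas; apply: closedI; [exact: Cn_closed|exact: pt_closed].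
have mCi : measurable (Cni_s i : set (OmegaB G)) by apply: closed_meas; exact: Cni_closed.
have hDn : D n !=set0 by have [d [hd _]] := D_rep n one; exists d.
have ea : fine (mu Cn_s) = fine (nu Cn_s).
  have hT := keyT HmuX Hmi; have hT' := keyT HnuX Hni.
  rewrite (@fsum_fine _ mu (fun _ => Cn_s)) // in hT.
  rewrite (@fsum_fine _ nu (fun _ => Cn_s)) // in hT'.
  case: hT => hT; case: hT' => hT'.
  rewrite (sum_constE _ (HDfin n)) in hT; rewrite (sum_constE _ (HDfin n)) in hT'.
  apply: (mul_cancel (count_pos (HDfin n) hDn)); rewrite hT hT'; reflexivity.
have hI := keyI HmuX Hmi i; have hI' := keyI HnuX Hni i.
rewrite (Hp i hi) -hI' in hI.
rewrite (@fsum_fine _ mu (fun v => Cn_s `&` [set y | y v = i])) // in hI.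
rewrite (@fsum_fine _ nu (fun v => Cn_s `&` [set y | y v = i])) // in hI.
case: hI => hI.
rewrite [LHS](fsbigID (J n) (D n) _ (HDfin n)) [RHS](fsbigID (J n) (D n) _ (HDfin n)) in hI.
have fDJ : finite_set (D n `&` J n) by apply: finite_setIl; exact: HDfin.
have hJn : (D n `&` J n) !=set0.
  by have [j hj] := H_nonempty n; exists j; split => //; exact: J_D.
have e1 : forall (m : probability (OmegaB G) R),
  (\sum_(v \in D n `&` J n) fine (m (Cn_s `&` [set y | y v = i])))%R =
  (fine (m (Cni_s i)) *+ count xpredT (fset_set (D n `&` J n)))%R.
  move=> m; rewrite -(sum_constE _ fDJ); apply: eq_fsbigr => v /set_mem [_ hv].
  by rewrite (SJ i hv).
have e2 : (\sum_(v \in D n `&` ~` J n) fine (mu (Cn_s `&` [set y | y v = i])))%R =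
  (\sum_(v \in D n `&` ~` J n) fine (nu (Cn_s `&` [set y | y v = i])))%R.
  apply: eq_fsbigr => v /set_mem [hv nv]; rewrite (SnJ i hv nv).
  by case: eqP => _; [rewrite ea|rewrite !measure0].
rewrite !e1 e2 in hI; move/addIr: hI => hI.
have hb := mul_cancel (count_pos fDJ hJn) hI.
by rewrite -(fineK (fin_num_measure mu _ mCi)) -(fineK (fin_num_measure nu _ mCi)) hb.
Qed.


Lemma main_Pn (R : realType) (mu nu : probability (OmegaB G) R) :
  mu X = 1%E -> nu X = 1%E ->
  (forall g (A : set (OmegaB G)), measurable A ->
     mu (sigma_act mul inv g @^-1` A) = mu A) ->
  (forall g (A : set (OmegaB G)), measurable A ->
     nu (sigma_act mul inv g @^-1` A) = nu A) ->
  (forall i, (1 <= i <= r)%N ->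
     mu [set x : OmegaB G | x one = i] = nu [set x : OmegaB G | x one = i]) ->
  forall A, Pn mul inv one Gam D r n A -> mu A = nu A.
Proof.
move=> HmuX HnuX Hmi Hni Hp A [i [v [hi hv eA]]].
have e : A = sig v @^-1` Cni_s i.
  rewrite eA; apply/funext => x; apply/propext; split.
    by move=> [y hy <-]; rewrite /= sig_comp gxV sig_one.
  by move=> hx; exists (sig v x) => //; rewrite sig_comp gVx sig_one.
have mCi : measurable (Cni_s i : set (OmegaB G)) by apply: closed_meas; exact: Cni_closed.
rewrite e Hmi // Hni //.
exact: Cni_eq.
Qed.

End Comb.

Unset Implicit Arguments.

Theorem lemma4p13
  (G : countType) (mul : G -> G -> G) (inv : G -> G) (one : G)
  (Hgrp : is_group mul inv one)
  (r : nat) (Hr : (1 < r)%N)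
  (Gam : nat -> set G) (D : nat -> set G)
  (HGam0 : Gam 0%N = setT)
  (HGamnorm : forall i, normal_subgroup mul inv one (Gam i))
  (HGamdec : forall i, Gam i.+1 `<` Gam i)
  (HGamcap : \bigcap_i Gam i = [set one])
  (HD0 : D 0%N = [set one])
  (HDfin : forall i, finite_set (D i))
  (HDtr : forall i, coset_transversal mul inv (D i) (Gam i))
  (HD1 : forall i, D i one)
  (HDinc : forall i, D i `<=` D i.+1)
  (HDcup : \bigcup_i D i = setT)
  (HDblock : forall i j, (1 <= i)%N -> (i < j)%N ->
     D j = \bigcup_(v in D j `&` Gam i) [set mul v d | d in D i])
  (Hind1 : forall i, (1 <= i)%N -> index_ge3 mul inv setT (Gam i))
  (Hind2 : forall i, (1 <= i)%N -> index_ge3 mul inv (Gam i) (Gam i.+1))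
  (R : realType) (mu nu : probability (OmegaB G) R)
  (HmuX : mu (Xsub mul inv one Gam D r) = 1%E)
  (HnuX : nu (Xsub mul inv one Gam D r) = 1%E)
  (Hmuinv : forall g (A : set (OmegaB G)), measurable A ->
     mu (sigma_act mul inv g @^-1` A) = mu A)
  (Hnuinv : forall g (A : set (OmegaB G)), measurable A ->
     nu (sigma_act mul inv g @^-1` A) = nu A)
  (Hp : forall i, (1 <= i <= r)%N ->
     mu [set x : OmegaB G | x one = i] = nu [set x : OmegaB G | x one = i]) :
  forall n, (1 <= n)%N ->
  forall A, Pn mul inv one Gam D r n A -> mu A = nu A.
Proof.
move=> n hn A hA.
exact: (main_Pn Hgrp Hr HGam0 HGamnorm HGamdec HD0 HDtr HDinc HDfin HDcup HDblock
  hn HmuX HnuX Hmuinv Hnuinv Hp hA).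
Qed.
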